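(* Let $n,m\ge 1$, $Q=\{1,\dots,n\}$ and $D=\{1,\dots,m\}$. Consider any MCT circuit $(g_1,\dots,g_m)$ on qubits $Q$ (as defined in the context) to which at least one of Swap 1, Swap 2, Swap 3 applies. Then, by applying Swap 1, Swap 2 and Swap 3 repeatedly (finitely many times), this circuit can be turned into an unswappable circuit.
   Context: An MCT circuit on qubits $Q=\{1,\dots,n\}$ with $m$ gate positions is a sequence $(g_1,\dots,g_m)$, where each gate $g_d$ ($d\in D=\{1,\dots,m\}$) is either empty, or consists of exactly one target qubit $t(g_d)\in Q$ together with a set $C(g_d)\subseteq Q\setminus\{t(g_d)\}$ of control qubits. (Equivalently, with binary variables $t_q^d$ indicating that $q$ is the target of gate $d$ and $w_q^d$ indicating that $q$ is a control of gate $d$: $t_q^d+w_q^d\le 1$, $\sum_q t_q^d\le 1$, and a gate with no target has no controls.) The following operations each exchange two consecutive gates $g_d$ and $g_{d+1}$ (for $d\in\{1,\dots,m-1\}$): Swap 1 (empty gate): if $g_d$ is empty and $g_{d+1}$ is not empty, swap $g_d$ and $g_{d+1}$. Swap 2 (different target): if $g_d$ has target $q$ and $g_{d+1}$ has target $r$ with $q>r$, and $q\notin C(g_{d+1})$ and $r\notin C(g_d)$, swap $g_d$ and $g_{d+1}$. Swap 3 (same target): if $g_d$ and $g_{d+1}$ have the same target qubit and $|C(g_d)|<|C(g_{d+1})|$, swap $g_d$ and $g_{d+1}$. A circuit is called swappable if at least one of Swap 1, Swap 2, Swap 3 can be applied to it (for some $d$), and unswappable otherwise. *)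

(* Defs.v *)
From mathcomp Require Import all_boot all_order all_fingroup.
From Stdlib Require Import Relations.
Set Implicit Arguments. Unset Strict Implicit. Unset Printing Implicit Defensive.

(* Qubits Q = {1..n} are represented by 'I_n (qubit q+1 ~ ordinal q, order preserved).
   Gate positions D = {1..m} are represented by 'I_m. *)

(* A gate: None = empty gate; Some (t, C) = target t with control set C. *)
Definition gate (n : nat) := option ('I_n * {set 'I_n}).

Definition wf_gate n (g : gate n) : bool :=
  if g is Some (t, C) then t \notin C else true.

Definition circuit n m := {ffun 'I_m -> gate n}.

Definition wf_circuit n m (c : circuit n m) : Prop := forall d, wf_gate (c d).

Definition exch n m (c : circuit n m) (d d' : 'I_m) : circuit n m :=
  [ffun i => c (tperm d d' i)].

Definition swap1_ok n (g g' : gate n) : bool :=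
  (g == None) && (g' != None).

Definition swap2_ok n (g g' : gate n) : bool :=
  match g, g' with
  | Some (q, C), Some (r, C') => [&& (r < q)%N, q \notin C' & r \notin C]
  | _, _ => false
  end.

Definition swap3_ok n (g g' : gate n) : bool :=
  match g, g' with
  | Some (q, C), Some (r, C') => (q == r) && (#|C| < #|C'|)%N
  | _, _ => false
  end.

Definition swap_ok n (g g' : gate n) : bool :=
  [|| swap1_ok g g', swap2_ok g g' | swap3_ok g g'].

Definition swap_step n m (c c' : circuit n m) : Prop :=
  exists (d d' : 'I_m), val d' = (val d).+1 /\ swap_ok (c d) (c d') /\ c' = exch c d d'.

Definition swappable n m (c : circuit n m) : Prop :=
  exists (d d' : 'I_m), val d' = (val d).+1 /\ swap_ok (c d) (c d').

Definition unswappable n m (c : circuit n m) : Prop := ~ swappable c.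

(* Main.v *)
Require Import Defs.
From mathcomp Require Import all_boot all_order all_fingroup.
From Stdlib Require Import Relations Classical.
From mathcomp Require Import zify.

Definition key n (g : gate n) : nat :=
  match g with
  | None => (n.+1) * (n.+1)
  | Some (t, C) => t * n.+1 + (n - #|C|)
  end.

Arguments key {n}.

Lemma key_dec n (g g' : gate n) : swap_ok g g' -> key g' < key g.
Proof.
case: g => [[q C]|]; case: g' => [[r C']|] //=; rewrite /swap_ok /swap1_ok /swap2_ok /swap3_ok /=.
- have hC : #|C| <= n by rewrite -[X in _ <= X]card_ord max_card.
  have hC' : #|C'| <= n by rewrite -[X in _ <= X]card_ord max_card.
  rewrite /key; case/orP => [/and3P [h _ _]|/andP [/eqP <- h]]; last first.
    rewrite ltn_add2l ltn_sub2l //. exact: leq_trans h hC'.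
  have : r * n.+1 + n.+1 <= q * n.+1 by rewrite -mulSnr leq_mul2r h orbT.
  lia.
- move=> _. have := ltn_ord r. have hC' : #|C'| <= n by rewrite -[X in _ <= X]card_ord max_card.
  nia.
Qed.

Definition pot n m (c : circuit n m) : nat := \sum_(i < m) (m - i) * key (c i).

Arguments pot {n m}.

Lemma sum2 m (F : 'I_m -> nat) (d d' : 'I_m) : d != d' ->
  \sum_(i < m) F i = F d + F d' + \sum_(i < m | (i != d) && (i != d')) F i.
Proof.
move=> ne. rewrite (bigD1 d) //= (bigD1 d') /=; last by rewrite eq_sym ne.
by rewrite addnA.
Qed.

Lemma pot_dec n m (c : circuit n m) (d d' : 'I_m) :
  val d' = (val d).+1 -> swap_ok (c d) (c d') -> pot (exch c d d') < pot c.
Proof.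
move=> hd hs. have ne : d != d'.
  by apply/eqP => E; rewrite E in hd; lia.
rewrite /pot (@sum2 m (fun i => (m - i) * key (exch c d d' i)) d d' ne) (@sum2 m (fun i => (m - i) * key (c i)) d d' ne).
have -> : \sum_(i < m | (i != d) && (i != d')) (m - i) * key (exch c d d' i)
   = \sum_(i < m | (i != d) && (i != d')) (m - i) * key (c i).
  apply: eq_bigr => i /andP [h1 h2]. rewrite /exch ffunE tpermD //.
  by rewrite eq_sym. by rewrite eq_sym.
rewrite /exch !ffunE tpermL tpermR.
have := @key_dec _ _ _ hs. have := ltn_ord d'. rewrite hd. 
move: (key (c d)) (key (c d')) => a b. rewrite ltn_add2r; change (\val d) with (nat_of_ord d) => h1 h2; nia.
Qed.

Lemma main n m : forall k (c : circuit n m), pot c <= k ->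
  exists c' : circuit n m,
    clos_refl_trans (circuit n m) (@swap_step n m) c c' /\ unswappable c'.
Proof.
elim=> [|k IH] c hk.
  case: (classic (swappable c)) => [[d [d' [hd hs]]]|hns].
    have := @pot_dec _ _ _ _ _ hd hs. lia.
  exists c; split => //. exact: rt_refl.
case: (classic (swappable c)) => [[d [d' [hd hs]]]|hns].
  have hp := @pot_dec _ _ _ _ _ hd hs.
  have [c' [h1 h2]] := IH (exch c d d') ltac:(lia).
  exists c'; split => //. apply: rt_trans h1. apply: rt_step.
  by exists d, d'.
exists c; split => //. exact: rt_refl.
Qed.

Theorem proposition1 (n m : nat) (hn : (1 <= n)%N) (hm : (1 <= m)%N)
  (c : circuit n m) (hwf : wf_circuit c) (hsw : swappable c) :
  exists c' : circuit n m,
    clos_refl_trans (circuit n m) (@swap_step n m) c c' /\ unswappable c'.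
Proof. exact: (@main n m _ c (leqnn (pot c))). Qed.
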